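(* Let $X$ be an unbounded connected coarse space. The following are equivalent: (1) $X$ is thin; (2) the coarse hyperspace $\mathcal{M}'\text{-}\exp X$ is connected, where $\mathcal{M}'(X)$ is the family of all non-empty meshy subsets of $X$; (3) the map $c_X\colon X\to\exp X$, $c_X(x)=X\setminus\{x\}$, is an asymorphic embedding.
   Context: Coarse structure $\mathcal{C}_X$: family of subsets of $X\times X$ containing the diagonal, closed under subsets, finite unions, inverses, compositions; connected if every singleton $\{(x,y)\}$ is controlled; bounded sets: $B$ with $B\times B\in\mathcal{C}_X$. $A\subseteq X$ is meshy if $\{x\in X:E[x]\subseteq A\}=\varnothing$ for some $E\in\mathcal{C}_X$. $X$ is thin if for every $E\in\mathcal{C}_X$ there is a bounded $B$ with $E[x]\cap E[y]=\varnothing$ for all distinct $x,y\in X\setminus B$. $\exp E=\{(A,B)\in\mathcal{P}(X)^2:A\subseteq E[B],\ B\subseteq E[A]\}$; $\exp X$ is $\mathcal{P}(X)$ with the coarse structure generated by $\{\exp E:E\in\mathcal{C}_X\}$; for $\mathcal{A}(X)\subseteq\mathcal{P}(X)$, $\mathcal{A}\text{-}\exp X$ is the subspace $\mathcal{A}(X)$ with restricted coarse structure. An asymorphic embedding is an injective map that is a bornologous bijection onto its image with bornologous inverse (bornologous: images of controlled sets under $f\times f$ are controlled). *)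

(* Defs.v *)
Set Implicit Arguments.

Definition rel (X : Type) := X -> X -> Prop.

Record is_coarse (X : Type) (C : rel X -> Prop) : Prop := {
  co_diag : C (fun x y => x = y);
  co_sub : forall E F : rel X, C E -> (forall x y, F x y -> E x y) -> C F;
  co_union : forall E F : rel X, C E -> C F -> C (fun x y => E x y \/ F x y);
  co_inv : forall E : rel X, C E -> C (fun x y => E y x);
  co_comp : forall E F : rel X, C E -> C F ->
      C (fun x z => exists y, E x y /\ F y z)
}.

Definition coarse_connected (X : Type) (C : rel X -> Prop) : Prop :=
  forall x y : X, C (fun a b => a = x /\ b = y).

Definition bounded (X : Type) (C : rel X -> Prop) (B : X -> Prop) : Prop :=
  C (fun x y => B x /\ B y).

Definition unbounded (X : Type) (C : rel X -> Prop) : Prop :=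
  ~ bounded C (fun _ => True).

(* E[x] = {y | (x,y) in E},  E[A] = union of E[a], a in A *)
Definition ball (X : Type) (E : rel X) (x : X) : X -> Prop := fun y => E x y.
Definition ballS (X : Type) (E : rel X) (A : X -> Prop) : X -> Prop :=
  fun y => exists a, A a /\ E a y.

Definition meshy (X : Type) (C : rel X -> Prop) (A : X -> Prop) : Prop :=
  exists E, C E /\ forall x : X, ~ (forall y, ball E x y -> A y).

Definition thin (X : Type) (C : rel X -> Prop) : Prop :=
  forall E, C E -> exists B, bounded C B /\
    forall x y : X, ~ B x -> ~ B y -> x <> y ->
      forall z, ~ (ball E x z /\ ball E y z).

Definition expRel (X : Type) (E : rel X) : rel (X -> Prop) :=
  fun A B => (forall a, A a -> ballS E B a) /\ (forall b, B b -> ballS E A b).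

Definition generated (Y : Type) (S : rel Y -> Prop) : rel Y -> Prop :=
  fun R => forall C' : rel Y -> Prop, is_coarse C' ->
     (forall E, S E -> C' E) -> C' R.

Definition expC (X : Type) (C : rel X -> Prop) : rel (X -> Prop) -> Prop :=
  generated (fun R => exists E, C E /\ R = expRel E).

Definition restrictC (Y : Type) (C : rel Y -> Prop) (P : Y -> Prop)
  : rel {y : Y | P y} -> Prop :=
  fun R => C (fun a b => exists (pa : P a) (pb : P b),
                           R (exist _ a pa) (exist _ b pb)).

Definition nonempty_meshy (X : Type) (C : rel X -> Prop) (A : X -> Prop) : Prop :=
  (exists x, A x) /\ meshy C A.

Definition bornologous (X Y : Type) (CX : rel X -> Prop) (CY : rel Y -> Prop)
  (f : X -> Y) : Prop :=
  forall E, CX E -> CY (fun u v => exists x y, E x y /\ u = f x /\ v = f y).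

(* asymorphic embedding: injective, bornologous, and its inverse on the image
   f(X) (with the subspace structure) is bornologous; since f is injective the
   image of R under the inverse is the preimage of R under f. *)
Definition asymorphic_embedding (X Y : Type) (CX : rel X -> Prop)
  (CY : rel Y -> Prop) (f : X -> Y) : Prop :=
  (forall x y, f x = f y -> x = y) /\
  bornologous CX CY f /\
  (forall R : rel Y, CY R ->
     (forall u v, R u v -> (exists x, u = f x) /\ (exists y, v = f y)) ->
     CX (fun x y => R (f x) (f y))).

Definition cX (X : Type) (x : X) : X -> Prop := fun y => y <> x.

(* Main.v *)
Require Import Defs.
From Stdlib Require Import Classical FunctionalExtensionality PropExtensionality.
From mathcomp Require classical_sets.
Set Implicit Arguments.

Lemma zorn_sets (T : Type) (P : (T -> Prop) -> Prop) :
  (forall F : (T -> Prop) -> Prop, (forall A, F A -> P A) ->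
     (forall A B, F A -> F B -> (forall x, A x -> B x) \/ (forall x, B x -> A x)) ->
     P (fun x => exists A, F A /\ A x)) ->
  exists A, P A /\ forall B, (forall x, A x -> B x) -> (exists x, B x /\ ~ A x) -> ~ P B.
Proof.
  intros H.
  destruct (@classical_sets.Zorn_bigcup T P) as [A [PA HA]].
  - intros F HF Htot.
    assert (E : classical_sets.bigcup F (fun X0 => X0) = (fun x => exists A, F A /\ A x)).
    { apply functional_extensionality; intro x; apply propositional_extensionality.
      unfold classical_sets.bigcup, classical_sets.mkset. split.
      - intros [i Fi ix]; eauto.
      - intros [i [Fi ix]]; econstructor; eauto. }
    rewrite E. apply H. exact HF.
    intros A1 B1 FA FB. destruct (Htot A1 B1 FA FB); auto.
  - exists A; split; auto. intros B HAB [x [Bx nAx]] PB.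
    apply (HA B); auto. split. exact HAB. intros Hs. apply nAx. apply Hs. exact Bx.
Qed.

Lemma expC_char (X : Type) (C : rel X -> Prop) (HC : is_coarse C) R :
  expC C R <-> exists E, C E /\ forall A B, R A B -> expRel E A B.
Proof.
  split.
  - intros H.
    apply (H (fun R => exists E, C E /\ forall A B, R A B -> expRel E A B)).
    + constructor.
      * exists (fun x y => x = y). split; [apply (co_diag HC)|].
        intros A B ->. split; intros a Ha; exists a; auto.
      * intros E F [G [HG HE]] HFE. exists G. split; auto.
      * intros E F [G1 [H1 K1]] [G2 [H2 K2]].
        exists (fun x y => G1 x y \/ G2 x y). split; [apply (co_union HC); auto|].
        intros A B [h|h].
        -- destruct (K1 _ _ h) as [p q]; split; intros a Ha;
             [destruct (p a Ha) as [b [? ?]] | destruct (q a Ha) as [b [? ?]]];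
             exists b; auto.
        -- destruct (K2 _ _ h) as [p q]; split; intros a Ha;
             [destruct (p a Ha) as [b [? ?]] | destruct (q a Ha) as [b [? ?]]];
             exists b; auto.
      * intros E [G [HG K]]. exists G. split; auto.
        intros A B h. destruct (K _ _ h) as [p q]; split; auto.
      * intros E F [G1 [H1 K1]] [G2 [H2 K2]].
        exists (fun x z => (exists y, G2 x y /\ G1 y z) \/ (exists y, G1 x y /\ G2 y z)).
        split; [apply (co_union HC); apply (co_comp HC); auto|].
        intros A D [B [h1 h2]].
        destruct (K1 _ _ h1) as [p1 q1]. destruct (K2 _ _ h2) as [p2 q2].
        split.
        -- intros a Ha. destruct (p1 a Ha) as [b [Hb Hba]].
           destruct (p2 b Hb) as [d [Hd Hdb]]. exists d. split; auto. left; eauto.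
        -- intros d Hd. destruct (q2 d Hd) as [b [Hb Hbd]].
           destruct (q1 b Hb) as [a [Ha Hab]]. exists a. split; auto. right; eauto.
    + intros E [E0 [HE0 ->]]. exists E0; auto.
  - intros [E [HE K]] C' HC' Hgen.
    apply (co_sub HC' (expRel E)).
    + apply Hgen; eauto.
    + intros; apply K; auto.
Qed.

Lemma bounded_sub (X : Type) (C : rel X -> Prop) (HC : is_coarse C) (B B' : X -> Prop) :
  bounded C B -> (forall x, B' x -> B x) -> bounded C B'.
Proof.
  intros H K. apply (co_sub HC _ _ H). intros x y [a b]; auto.
Qed.

Lemma bounded_ball (X : Type) (C : rel X -> Prop) (HC : is_coarse C) (B : X -> Prop) E :
  bounded C B -> C E -> bounded C (ballS E B).
Proof.
  intros H HE. unfold bounded.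
  apply (co_sub HC (fun x y => exists b1, E b1 x /\ exists b2, (B b1 /\ B b2) /\ E b2 y)).
  - apply (co_comp HC); [apply (co_inv HC); auto|]. apply (co_comp HC); auto.
  - intros x y [[b1 [h1 e1]] [b2 [h2 e2]]]. exists b1; split; auto. exists b2; auto.
Qed.

Lemma bounded_empty (X : Type) (C : rel X -> Prop) (HC : is_coarse C) (B : X -> Prop) :
  (forall x, ~ B x) -> bounded C B.
Proof.
  intros H. apply (co_sub HC _ _ (co_diag HC)). intros x y [a b]. exfalso; eapply H; eauto.
Qed.

Lemma bounded_single (X : Type) (C : rel X -> Prop) (HC : is_coarse C)
  (Hconn : coarse_connected C) (x0 : X) : bounded C (fun x => x = x0).
Proof.
  apply (co_sub HC _ _ (Hconn x0 x0)). auto.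
Qed.

Lemma bounded_union (X : Type) (C : rel X -> Prop) (HC : is_coarse C)
  (Hconn : coarse_connected C) (B1 B2 : X -> Prop) a1 a2 :
  bounded C B1 -> bounded C B2 -> B1 a1 -> B2 a2 ->
  bounded C (fun x => B1 x \/ B2 x).
Proof.
  intros H1 H2 h1 h2.
  assert (K : forall P Q a b, bounded C P -> bounded C Q -> P a -> Q b ->
            C (fun x y => P x /\ Q y)).
  { intros P Q a b HP HQ Pa Qb.
    apply (co_sub HC (fun x z => exists y, (P x /\ P y) /\
              exists w, (y = a /\ w = b) /\ (Q w /\ Q z))).
    - apply (co_comp HC); auto. apply (co_comp HC); auto.
    - intros x y [Px Qy]. exists a. split; auto. exists b. auto. }
  unfold bounded.
  apply (co_sub HC (fun x y => ((B1 x /\ B1 y) \/ (B2 x /\ B2 y)) \/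
                               ((B1 x /\ B2 y) \/ (B2 x /\ B1 y)))).
  - apply (co_union HC); apply (co_union HC); eauto.
  - intros x y [[?|?] [?|?]]; tauto.
Qed.

Definition Fr (X : Type) (E : rel X) : rel X := fun x y => exists z, E x z /\ E y z.
Definition Nn (X : Type) (E : rel X) : X -> Prop := fun x => exists y, y <> x /\ Fr E x y.

Lemma Fr_C (X : Type) (C : rel X -> Prop) (HC : is_coarse C) E : C E -> C (Fr E).
Proof.
  intros HE. apply (co_sub HC _ _ (co_comp HC _ _ HE (co_inv HC _ HE))).
  intros x y [z [? ?]]; eauto.
Qed.

Lemma thin_of_Nn (X : Type) (C : rel X -> Prop) :
  (forall E, C E -> bounded C (Nn E)) -> thin C.
Proof.
  intros H E HE. exists (Nn E). split; auto.
  intros x y nx ny xy z [h1 h2]. apply nx. exists y. split; auto.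
  exists z; auto.
Qed.

Lemma meshy_bounded (X : Type) (C : rel X -> Prop) (HC : is_coarse C) A :
  thin C -> meshy C A -> exists B, bounded C B /\ forall a, A a -> B a.
Proof.
  intros Ht [G [HG HM]].
  set (E := fun x y => G x y \/ G y x \/ x = y).
  assert (HE : C E).
  { apply (co_union HC); auto. apply (co_union HC). apply (co_inv HC); auto. apply (co_diag HC). }
  destruct (Ht E HE) as [B [HB K]].
  exists (ballS E B). split; [apply bounded_ball; auto|].
  intros a Ha.
  destruct (not_all_ex_not _ _ (HM a)) as [y Hy].
  apply imply_to_and in Hy. destruct Hy as [Gay nAy].
  destruct (classic (B a)) as [Ba|nBa].
  - exists a. split; auto. unfold E; auto.
  - destruct (classic (B y)) as [By|nBy].
    + exists y. split; auto. unfold E; auto.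
    + exfalso. assert (a <> y) by (intro; subst; auto).
      apply (K a y nBa nBy H y). unfold ball, E. auto.
Qed.

Lemma part12 (X : Type) (C : rel X -> Prop) (HC : is_coarse C) (Hconn : coarse_connected C) :
  thin C -> coarse_connected (restrictC (expC C) (nonempty_meshy C)).
Proof.
  intros Ht [A [[a Ha] MA]] [B [[b Hb] MB]].
  unfold restrictC. apply expC_char; auto.
  destruct (meshy_bounded HC Ht MA) as [B1 [HB1 K1]].
  destruct (meshy_bounded HC Ht MB) as [B2 [HB2 K2]].
  assert (HU : bounded C (fun x => B1 x \/ B2 x)) by (eapply bounded_union; eauto).
  eexists. split; [exact HU|].
  intros A' B' [pa [pb [e1 e2]]].
  apply (f_equal (@proj1_sig _ _)) in e1. apply (f_equal (@proj1_sig _ _)) in e2.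
  simpl in e1, e2. subst A' B'.
  split.
  - intros x Hx. exists b. split; auto.
  - intros x Hx. exists a. split; auto.
Qed.

Lemma part21 (X : Type) (C : rel X -> Prop) (HC : is_coarse C) (Hconn : coarse_connected C)
  (Hunb : unbounded C) :
  coarse_connected (restrictC (expC C) (nonempty_meshy C)) -> thin C.
Proof.
  intros H2.
  assert (Hx : exists x0 x1 : X, x0 <> x1).
  { apply NNPP; intro Hn. apply Hunb.
    destruct (classic (exists x0 : X, True)) as [[x0 _]|Hne].
    - apply (co_sub HC _ _ (Hconn x0 x0)). intros x y _.
      split; apply NNPP; intro; apply Hn; eauto.
    - apply (co_sub HC _ _ (co_diag HC)). intros x y _. exfalso; eauto. }
  destruct Hx as [x0 [x1 Hx01]].
  assert (M0 : nonempty_meshy C (fun x => x = x0)).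
  { split; [eauto|].
    exists (fun x y => x = y \/ (x = x0 /\ y = x1)). split.
    - apply (co_union HC); [apply (co_diag HC)|apply Hconn].
    - intros x Hall. destruct (classic (x = x0)) as [->|nx].
      + apply Hx01. symmetry. apply Hall. right; auto.
      + apply nx. apply Hall. left; auto. }
  assert (MB : forall A, meshy C A -> bounded C A).
  { intros A MA. destruct (classic (exists a, A a)) as [[a Ha]|Hne].
    - pose proof (H2 (exist _ A (conj (ex_intro _ a Ha) MA)) (exist _ _ M0)) as H.
      unfold restrictC in H. apply expC_char in H; auto.
      destruct H as [E [HE K]].
      destruct (K A (fun x => x = x0)) as [p _].
      { exists (conj (ex_intro _ a Ha) MA), M0. auto. }
      apply (bounded_sub HC (ballS E (fun x => x = x0))).
      + apply bounded_ball; auto. apply bounded_single; auto.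
      + exact p.
    - apply bounded_empty; auto. intros x Ax; eauto. }
  apply thin_of_Nn. intros E HE.
  assert (HF : C (Fr E)) by (apply Fr_C; auto).
  set (G := fun x y => Fr E x y \/ x = y).
  assert (HG : C G) by (apply (co_union HC); auto; apply (co_diag HC)).
  set (P := fun A : X -> Prop => (forall x, A x -> Nn E x) /\
                                 forall x y, A x -> A y -> Fr E x y -> x = y).
  destruct (@zorn_sets X P) as [M [[PM1 PM2] Mmax]].
  { intros F HFP Htot. split.
    - intros x [A [FA Ax]]. exact (proj1 (HFP A FA) x Ax).
    - intros x y [A [FA Ax]] [B [FB By]] Hxy.
      destruct (Htot A B FA FB) as [h|h].
      + exact (proj2 (HFP B FB) x y (h x Ax) By Hxy).
      + exact (proj2 (HFP A FA) x y Ax (h y By) Hxy). }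
  assert (HMm : meshy C M).
  { exists G. split; auto. intros x Hall.
    destruct (classic (M x)) as [Mx|nMx].
    - destruct (PM1 x Mx) as [y [yx Fxy]]. apply yx. symmetry.
      apply PM2; auto. apply Hall. left; auto.
    - apply nMx. apply Hall. right; auto. }
  apply (bounded_sub HC (ballS G M)).
  - apply bounded_ball; auto.
  - intros x Nx. destruct (classic (M x)) as [Mx|nMx].
    + exists x. split; auto. right; auto.
    + assert (nP : ~ P (fun y => M y \/ y = x)).
      { apply Mmax; auto. exists x. auto. }
      apply NNPP; intro Hn. apply nP. split.
      * intros y [My| ->]; auto.
      * intros u v Hu Hv Fuv. apply NNPP; intro uv.
        destruct Hu as [Mu| ->]; destruct Hv as [Mv| ->].
        -- apply uv; auto.
        -- apply Hn. exists u. split; auto. left; auto.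
        -- apply Hn. exists v. split; auto. left. destruct Fuv as [z [? ?]]. exists z; auto.
        -- auto.
Qed.

Lemma cX_born (X : Type) (C : rel X -> Prop) (HC : is_coarse C) :
  bornologous C (expC C) (@cX X).
Proof.
  intros E HE. apply expC_char; auto.
  exists (fun a b => E a b \/ E b a \/ a = b). split.
  { apply (co_union HC); auto. apply (co_union HC). apply (co_inv HC); auto. apply (co_diag HC). }
  intros U V [x [y [Exy [-> ->]]]]. unfold expRel, ballS, cX. split.
  - intros a ax. destruct (classic (a = y)) as [->|ay].
    + exists x. split; [intro; subst; auto | auto].
    + exists a. auto.
  - intros b bx. destruct (classic (b = x)) as [->|bx'].
    + exists y. split; [intro; subst; auto | auto].
    + exists b. auto.
Qed.

Lemma cX_inj (X : Type) (x y : X) : cX x = cX y -> x = y.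
Proof.
  intros H. apply NNPP; intro n.
  assert (h : cX x y) by (unfold cX; auto).
  rewrite H in h. apply h; auto.
Qed.

Lemma part13 (X : Type) (C : rel X -> Prop) (HC : is_coarse C) :
  thin C -> asymorphic_embedding C (expC C) (@cX X).
Proof.
  intros Ht. split; [exact (@cX_inj X)|]. split; [apply cX_born; auto|].
  intros R HR _. apply expC_char in HR; auto. destruct HR as [E [HE K]].
  set (E2 := fun x y => E x y \/ E y x \/ x = y).
  assert (HE2 : C E2).
  { apply (co_union HC); auto. apply (co_union HC). apply (co_inv HC); auto. apply (co_diag HC). }
  destruct (Ht E2 HE2) as [B [HB KB]].
  assert (HB' : bounded C (ballS E2 B)) by (apply bounded_ball; auto).
  apply (co_sub HC (fun x y => x = y \/ (ballS E2 B x /\ ballS E2 B y))).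
  { apply (co_union HC); auto. apply (co_diag HC). }
  intros x y Rxy. destruct (classic (x = y)) as [xy|xy]; [left; auto|right].
  destruct (K _ _ Rxy) as [p q]. unfold cX in p, q.
  assert (L : forall u b, b <> u -> E b u -> ballS E2 B u).
  { intros u b bu Ebu.
    destruct (classic (B u)) as [Bu|nBu].
    - exists u. split; auto. unfold E2; auto.
    - destruct (classic (B b)) as [Bb|nBb].
      + exists b. split; auto. unfold E2; auto.
      + exfalso. apply (KB b u nBb nBu bu u). unfold ball, E2. auto. }
  split.
  - destruct (q x) as [b [bx Ebx]]. { intro; subst; auto. }
    eapply L; eauto.
  - destruct (p y) as [b [by' Eby]]. { intro; subst; auto. }
    eapply L; eauto.
Qed.

Lemma part31 (X : Type) (C : rel X -> Prop) (HC : is_coarse C) :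
  asymorphic_embedding C (expC C) (@cX X) -> thin C.
Proof.
  intros [_ [_ H3]]. apply thin_of_Nn. intros E HE.
  assert (HF : C (Fr E)) by (apply Fr_C; auto).
  set (R := fun U V => exists x y, U = cX x /\ V = cX y /\ (x = y \/ (Nn E x /\ Nn E y))).
  assert (HR : expC C R).
  { apply expC_char; auto. exists (fun a b => Fr E a b \/ a = b). split.
    { apply (co_union HC); auto. apply (co_diag HC). }
    intros U V [x [y [-> [-> [xy|[Nx Ny]]]]]].
    - subst. split; intros a Ha; exists a; auto.
    - unfold cX. split.
      + intros a ax. destruct (classic (a = y)) as [->|ay].
        * destruct Ny as [w [wy [z [h1 h2]]]]. exists w. split; auto.
          left. exists z; auto.
        * exists a; auto.
      + intros a ay. destruct (classic (a = x)) as [->|ax].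
        * destruct Nx as [w [wx [z [h1 h2]]]]. exists w. split; auto.
          left. exists z; auto.
        * exists a; auto. }
  assert (Himg : forall u v, R u v -> (exists x, u = cX x) /\ (exists y, v = cX y)).
  { intros u v [x [y [? [? _]]]]; eauto. }
  pose proof (H3 R HR Himg) as HP.
  apply (co_sub HC _ _ HP). intros x y [Nx Ny]. exists x, y. auto.
Qed.

Theorem mainTheorem20 (X : Type) (C : rel X -> Prop)
  (HC : is_coarse C) (Hconn : coarse_connected C) (Hunb : unbounded C) :
  (thin C <-> coarse_connected (restrictC (expC C) (nonempty_meshy C))) /\
  (thin C <-> asymorphic_embedding C (expC C) (@cX X)).
Proof.
  split; split.
  - apply part12; auto.
  - apply part21; auto.
  - apply part13; auto.
  - apply part31; auto.
Qed.
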